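(* For every positive integer $n$ and every complex number $q$ with $0<|q|<1$, \[ \sum_{k=1}^{n}[4k+1]\frac{(q;q^2)_k^3}{(q^2;q^2)_k^3}\frac{(q^{-2n};q^2)_k}{(q^{3+2n};q^2)_k}\,q^{(1+2n)k}\sum_{i=1}^{2k}(-1)^i\frac{q^i}{[i]^2} =\frac{(q,q^3;q^2)_{n}}{(q^2;q^2)_{n}^2}\sum_{j=1}^n\frac{q^{2j}}{[2j]^2}. \]
   Context: For complex $x,q$ and an integer $n\ge 0$, $(x;q)_n=\prod_{i=0}^{n-1}(1-xq^i)$, and $(x_1,\dots,x_r;q)_n=(x_1;q)_n\cdots(x_r;q)_n$. The $q$-integer is $[n]=1+q+\cdots+q^{n-1}=(1-q^n)/(1-q)$. *)

(* Defs.v *)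
From HB Require Import structures.
From mathcomp Require Import all_boot all_order all_algebra.
From mathcomp Require Export complex.
Set Implicit Arguments. Unset Strict Implicit. Unset Printing Implicit Defensive.
Import Order.TTheory GRing.Theory Num.Theory.
Local Open Scope ring_scope.

Definition qpoch {F : comRingType} (x q : F) (n : nat) : F :=
  \prod_(i < n) (1 - x * q ^+ i).

Definition qint {F : comRingType} (q : F) (n : nat) : F :=
  \sum_(i < n) q ^+ i.

(* Main.v *)
Require Import Defs.
From HB Require Import structures.
From mathcomp Require Import all_boot all_order all_algebra.
From mathcomp Require Import complex.
From mathcomp Require Import ring zify.
Import Order.TTheory GRing.Theory Num.Theory.
Local Open Scope ring_scope.

Section Gen.
Variable F : fieldType.

Lemma qpochS (x p : F) k : qpoch x p k.+1 = qpoch x p k * (1 - x * p ^+ k).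
Proof. by rewrite /qpoch big_ord_recr. Qed.

Lemma qpoch0 (x p : F) : qpoch x p 0 = 1.
Proof. by rewrite /qpoch big_ord0. Qed.

Lemma qpoch_shift (x p : F) k :
  (1 - x) * qpoch (x * p) p k = qpoch x p k * (1 - x * p ^+ k).
Proof.
elim: k => [|k IH]; first by rewrite !qpoch0 expr0; ring.
rewrite !qpochS mulrA IH exprS; ring.
Qed.

Lemma qint_mul (q : F) m : qint q m * (1 - q) = 1 - q ^+ m.
Proof.
elim: m => [|m IH]; first by rewrite /qint big_ord0 mul0r expr0 subrr.
rewrite /qint big_ord_recr /= mulrDl -/(qint q m) IH exprS; ring.
Qed.

End Gen.

Section Main.
Variable F : fieldType.
Variable q : F.
Hypothesis hq0 : q != 0.
Hypothesis hq1 : forall m, (0 < m)%N -> 1 - q ^+ m != 0.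

Definition T n k := qint q (4 * k + 1)
      * (qpoch q (q ^+ 2) k) ^+ 3 / (qpoch (q ^+ 2) (q ^+ 2) k) ^+ 3
      * (qpoch ((q ^+ (2 * n))^-1) (q ^+ 2) k) / (qpoch (q ^+ (3 + 2 * n)) (q ^+ 2) k)
      * q ^+ ((1 + 2 * n) * k).
Definition Cn n := qpoch q (q ^+ 2) n * qpoch (q ^+ 3) (q ^+ 2) n / (qpoch (q ^+ 2) (q ^+ 2) n) ^+ 2.
Definition X m := q ^+ (2 * m).

Lemma pw a b : a = b -> q ^+ a = q ^+ b. Proof. by move->. Qed.

Lemma q1 : 1 - q != 0. Proof. by have := @hq1 1 isT; rewrite expr1. Qed.

Lemma qintE m : qint q m = (1 - q ^+ m) / (1 - q).
Proof. rewrite -qint_mul mulfK //; exact: q1. Qed.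

Lemma qpoch_nz a k : (0 < a)%N -> qpoch (q ^+ a) (q ^+ 2) k != 0.
Proof.
move=> ha; rewrite /qpoch; apply/prodf_neq0 => i _.
rewrite -exprM -exprD; apply: hq1; lia.
Qed.

Lemma Xnz m : X m != 0. Proof. by rewrite /X expf_neq0. Qed.

Lemma T_k m k : T m k.+1 = T m k *
  ((1 - q ^+ 5 * X k ^+ 2) / (1 - q * X k ^+ 2) * ((1 - q * X k) / (1 - q ^+ 2 * X k)) ^+ 3
   * (1 - X k / X m) / (1 - q ^+ 3 * X m * X k) * (q * X m)).
Proof.
rewrite /T !qpochS !qintE.
have e1 : q ^+ (4 * k.+1 + 1) = q ^+ 5 * X k ^+ 2 by rewrite /X -exprM -exprD; apply: pw; lia.
have e2 : q ^+ (4 * k + 1) = q * X k ^+ 2 by rewrite /X -exprM -exprS; apply: pw; lia.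
have e3 : (q ^+ 2) ^+ k = X k by rewrite /X exprM.
have e4 : q ^+ (3 + 2 * m) = q ^+ 3 * X m by rewrite /X -exprD.
have e5 : q ^+ ((1 + 2 * m) * k.+1) = q ^+ ((1 + 2 * m) * k) * (q * X m).
  by rewrite /X -exprS -exprD; apply: pw; lia.
have e6 : q ^+ (2 * m) = X m by [].
rewrite e1 e2 e3 e4 e5 e6.
have h1 := @qpoch_nz 2 k isT.
have h2 : qpoch (q ^+ 3 * X m) (q ^+ 2) k != 0 by rewrite -e4; apply: qpoch_nz; lia.
have h3 : 1 - q * X k ^+ 2 != 0 by rewrite -e2; apply: hq1; lia.
have h4 : 1 - q ^+ 2 * X k != 0 by rewrite /X -exprD; apply: hq1; lia.
have h5 : 1 - q ^+ 3 * X m * X k != 0 by rewrite /X -!exprD; apply: hq1; lia.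
have h6 := Xnz m. have h7 := Xnz k. have h8 := q1.
field; repeat (apply/andP; split); assumption.
Qed.

Lemma one_sub_inv (a : F) : 1 - a != 0 -> 1 - a^-1 != 0.
Proof. by rewrite !subr_eq0 !(eq_sym 1) invr_eq1. Qed.

Lemma T_n n k : T n k = T n.+1 k *
  ((1 - X k / (q ^+ 2 * X n)) / (1 - (q ^+ 2 * X n)^-1)
   * (1 - q ^+ (3 + 2 * n) * X k) / (1 - q ^+ (3 + 2 * n)) / X k).
Proof.
have eX : q ^+ (2 * n.+1) = q ^+ 2 * X n by rewrite /X -exprD; apply: pw; lia.
have eW : q ^+ (3 + 2 * n.+1) = q ^+ (3 + 2 * n) * q ^+ 2 by rewrite -exprD; apply: pw; lia.
have eP : q ^+ ((1 + 2 * n.+1) * k) = q ^+ ((1 + 2 * n) * k) * X k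
  by rewrite /X -exprD; apply: pw; lia.
have e3 : (q ^+ 2) ^+ k = X k by rewrite /X exprM.
have hXn := Xnz n. have hXk := Xnz k.
have hq2 : q ^+ 2 != 0 by rewrite expf_neq0.
have h2n : 1 - q ^+ 2 * X n != 0 by rewrite /X -exprD; apply: hq1; lia.
have h2n' := @one_sub_inv _ h2n.
have hw : 1 - q ^+ (3 + 2 * n) != 0 by apply: hq1; lia.
have hwk : 1 - q ^+ (3 + 2 * n) * X k != 0 by rewrite /X -exprD; apply: hq1; lia.
have hW1 : qpoch (q ^+ (3 + 2 * n) * q ^+ 2) (q ^+ 2) k != 0
  by rewrite -exprD; apply: qpoch_nz; lia.
have s1 := @qpoch_shift _ ((q ^+ 2 * X n)^-1) (q ^+ 2) k.
have s2 := @qpoch_shift _ (q ^+ (3 + 2 * n)) (q ^+ 2) k.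
have ex : (q ^+ 2 * X n)^-1 * q ^+ 2 = (X n)^-1 by field; repeat (apply/andP; split); assumption.
rewrite ex e3 in s1. rewrite e3 in s2.
have P0E : qpoch (X n)^-1 (q ^+ 2) k =
  qpoch (q ^+ 2 * X n)^-1 (q ^+ 2) k * (1 - (q ^+ 2 * X n)^-1 * X k) / (1 - (q ^+ 2 * X n)^-1).
  by rewrite -s1 mulrC mulKf.
have W0E : qpoch (q ^+ (3 + 2 * n)) (q ^+ 2) k =
  (1 - q ^+ (3 + 2 * n)) * qpoch (q ^+ (3 + 2 * n) * q ^+ 2) (q ^+ 2) k / (1 - q ^+ (3 + 2 * n) * X k).
  by rewrite s2 mulfK.
rewrite /T eX eW eP -/(X n) P0E W0E.
have h1 := @qpoch_nz 2 k isT.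
have h8 := q1.
field; repeat (apply/andP; split); try assumption; by rewrite -oppr_eq0 opprB.
Qed.

Lemma XS m : X m.+1 = q ^+ 2 * X m.
Proof. by rewrite /X -exprD; apply: pw; lia. Qed.

Lemma Cn_S n : Cn n.+1 = Cn n * ((1 - q * X n) * (1 - q ^+ 3 * X n) / (1 - q ^+ 2 * X n) ^+ 2).
Proof.
have e3 : (q ^+ 2) ^+ n = X n by rewrite /X exprM.
have h1 := @qpoch_nz 2 n isT.
have h2 : 1 - q ^+ 2 * X n != 0 by rewrite /X -exprD; apply: hq1; lia.
rewrite /Cn !qpochS e3; field; repeat (apply/andP; split); assumption.
Qed.

Lemma Cn_nz n : Cn n != 0.
Proof.
rewrite /Cn; apply: mulf_neq0; last by rewrite invr_eq0 expf_neq0 // qpoch_nz.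
rewrite mulf_neq0 // ?qpoch_nz //.
by rewrite -{1}(expr1 q) qpoch_nz.
Qed.

Definition Hs k := \sum_(1 <= i < (2 * k).+1) ((-1) ^+ i * q ^+ i / (qint q i) ^+ 2).
Definition Js n := \sum_(1 <= j < n.+1) (q ^+ (2 * j) / (qint q (2 * j)) ^+ 2).

Lemma Hs_S k : Hs k.+1 = Hs k +
  (1 - q) ^+ 2 * (q ^+ 2 * X k / (1 - q ^+ 2 * X k) ^+ 2 - q * X k / (1 - q * X k) ^+ 2).
Proof.
rewrite /Hs (_ : (2 * k.+1).+1 = (2 * k).+3)%N; last lia.
rewrite big_nat_recr /=; last lia.
rewrite big_nat_recr /=; last lia.
rewrite !qintE.
have e1 : q ^+ (2 * k).+1 = q * X k by rewrite exprS.
have e2 : q ^+ (2 * k).+2 = q ^+ 2 * X k by rewrite /X -exprD; apply: pw; lia.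
have s1 : (-1) ^+ (2 * k).+1 = - 1 :> F by rewrite exprS exprM sqrrN expr1n expr1n mulr1.
have s2 : (-1) ^+ (2 * k).+2 = 1 :> F by rewrite !exprS exprM sqrrN expr1n expr1n; ring.
rewrite e1 e2 s1 s2 -addrA.
have h1 : 1 - q * X k != 0 by rewrite -e1; apply: hq1.
have h2 : 1 - q ^+ 2 * X k != 0 by rewrite -e2; apply: hq1.
have h8 := q1.
congr (_ + _); field; repeat (apply/andP; split); assumption.
Qed.

Lemma Js_S n : Js n.+1 = Js n + (1 - q) ^+ 2 * (q ^+ 2 * X n / (1 - q ^+ 2 * X n) ^+ 2).
Proof.
rewrite /Js big_nat_recr /=; last lia.
rewrite qintE.
have e2 : q ^+ (2 * n.+1) = q ^+ 2 * X n by rewrite -XS.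
rewrite e2.
have h2 : 1 - q ^+ 2 * X n != 0 by rewrite -e2; apply: hq1; lia.
have h8 := q1.
congr (_ + _); field; repeat (apply/andP; split); assumption.
Qed.

Ltac nz1 := rewrite /X; repeat (first [rewrite -exprM | rewrite -exprS | rewrite -exprD]); apply: hq1; lia.
Ltac nzt := first [assumption | by rewrite /X expf_neq0 | (rewrite -oppr_eq0 opprB; nz1) | nz1].
Ltac fld := field; repeat (apply/andP; split); nzt.

Definition tau n k := T n k / Cn n.
Definition Rr n k := - (q ^+ 2 * X n * (1 - X k) ^+ 3 * (1 - q ^+ 3 * X n * X k))
   / ((1 - q ^+ 2 * X n) ^+ 3 * X k * (1 - q * X k ^+ 2)).
Definition Rd n k := (1 - q) ^+ 2 * (q ^+ 2 * X n * (1 - X k) * (1 - q ^+ 3 * X n * X k)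
   / ((1 - q ^+ 2 * X n) ^+ 3 * (1 - q * X k ^+ 2)) + Rr n k * (q ^+ 2 * X n / (1 - q ^+ 2 * X n) ^+ 2)).
Definition G n k := Rr n k * tau n.+1 k.
Definition G1 n k := tau n.+1 k * (Rd n k + Rr n k * (Hs k - Js n.+1)).

Lemma WZ0 n k : tau n.+1 k - tau n k = G n k.+1 - G n k.
Proof.
rewrite /G /tau /Rr (T_k n.+1 k) (T_n n k) Cn_S !XS.
have e4 : q ^+ (3 + 2 * n) = q ^+ 3 * X n by rewrite /X -exprD.
rewrite e4.
have hC := Cn_nz n.
fld.
Qed.

Lemma WZ1 n k : tau n.+1 k * (Hs k - Js n.+1) - tau n k * (Hs k - Js n) = G1 n k.+1 - G1 n k.
Proof.
rewrite /G1 /Rd /tau /Rr (T_k n.+1 k) (T_n n k) Cn_S Hs_S !Js_S !XS.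
have e4 : q ^+ (3 + 2 * n) = q ^+ 3 * X n by rewrite /X -exprD.
rewrite e4.
have hC := Cn_nz n.
time fld.
Qed.

Lemma T_vanish n : T n n.+1 = 0.
Proof.
rewrite /T (@qpochS _ ((q ^+ (2 * n))^-1)) -exprM mulVf ?expf_neq0 // subrr.
by rewrite !(mulr0, mul0r).
Qed.

Lemma tau_vanish n : tau n n.+1 = 0.
Proof. by rewrite /tau T_vanish mul0r. Qed.

Lemma X0 : X 0 = 1. Proof. by rewrite /X muln0 expr0. Qed.

Lemma Rr0 n : Rr n 0 = 0.
Proof. rewrite /Rr X0 subrr; ring. Qed.

Lemma Rd0 n : Rd n 0 = 0.
Proof. rewrite /Rd Rr0 X0 subrr; ring. Qed.

Lemma G_0 n : G n 0 = 0. Proof. by rewrite /G Rr0 mul0r. Qed.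
Lemma G1_0 n : G1 n 0 = 0. Proof. by rewrite /G1 Rr0 Rd0; ring. Qed.
Lemma G_end n : G n n.+2 = 0. Proof. by rewrite /G tau_vanish mulr0. Qed.
Lemma G1_end n : G1 n n.+2 = 0. Proof. by rewrite /G1 tau_vanish mul0r. Qed.

Lemma tau00 : tau 0 0 = 1.
Proof.
rewrite /tau /T /Cn !qpoch0 /qint big_ord1 !expr0 !expr1n.
by rewrite !(mulr1, invr1, mul1r, divr1).
Qed.

Lemma S_all n : \sum_(0 <= k < n.+1) tau n k = 1.
Proof.
elim: n => [|n IH]; first by rewrite big_nat1 tau00.
have E : \sum_(0 <= k < n.+2) tau n.+1 k - \sum_(0 <= k < n.+1) tau n k = 0.
  rewrite (_ : \sum_(0 <= k < n.+1) tau n k = \sum_(0 <= k < n.+2) tau n k); last first.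
    by rewrite [RHS]big_nat_recr //= tau_vanish addr0.
  rewrite -sumrB (telescope_sumr_eq (G n)) //; last by move=> k _; exact: WZ0.
  by rewrite G_end G_0 subrr.
by move/eqP: E; rewrite subr_eq0 IH => /eqP.
Qed.

Lemma D_all n : \sum_(0 <= k < n.+1) tau n k * (Hs k - Js n) = 0.
Proof.
elim: n => [|n IH]; first by rewrite big_nat1 /Hs /Js !big_geq // subrr mulr0.
have E : \sum_(0 <= k < n.+2) tau n.+1 k * (Hs k - Js n.+1)
   - \sum_(0 <= k < n.+1) tau n k * (Hs k - Js n) = 0.
  rewrite (_ : \sum_(0 <= k < n.+1) tau n k * (Hs k - Js n) =
      \sum_(0 <= k < n.+2) tau n k * (Hs k - Js n)); last first.
    by rewrite [RHS]big_nat_recr //= tau_vanish mul0r addr0.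
  rewrite -sumrB (telescope_sumr_eq (G1 n)) //; last by move=> k _; exact: WZ1.
  by rewrite G1_end G1_0 subrr.
by move/eqP: E; rewrite subr_eq0 IH => /eqP.
Qed.

Lemma main_gen n : \sum_(1 <= k < n.+1) (T n k * Hs k) = Cn n * Js n.
Proof.
have H1 : \sum_(0 <= k < n.+1) tau n k * Hs k = Js n.
  move: (D_all n); under eq_bigr do rewrite mulrBr.
  rewrite sumrB -mulr_suml S_all mul1r => /eqP; rewrite subr_eq0 => /eqP //.
have hC := Cn_nz n.
have H2 : \sum_(0 <= k < n.+1) T n k * Hs k = Cn n * Js n.
  rewrite -H1 mulr_sumr; apply: eq_bigr => k _; rewrite /tau; field.
  by [].
rewrite -H2 (big_ltn (m := 0%N)) //.
have -> : Hs 0 = 0 by rewrite /Hs big_geq.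
by rewrite mulr0 add0r.
Qed.
End Main.

Local Open Scope complex_scope.

Theorem mainTheorem10 (R : rcfType) (n : nat) (q : R[i]) :
  (0 < n)%N -> 0 < `|q| -> `|q| < 1 ->
  \sum_(1 <= k < n.+1)
     (qint q (4 * k + 1)
      * (qpoch q (q ^+ 2) k) ^+ 3 / (qpoch (q ^+ 2) (q ^+ 2) k) ^+ 3
      * (qpoch ((q ^+ (2 * n))^-1) (q ^+ 2) k) / (qpoch (q ^+ (3 + 2 * n)) (q ^+ 2) k)
      * q ^+ ((1 + 2 * n) * k)
      * \sum_(1 <= i < (2 * k).+1) ((-1) ^+ i * q ^+ i / (qint q i) ^+ 2))
  = qpoch q (q ^+ 2) n * qpoch (q ^+ 3) (q ^+ 2) n / (qpoch (q ^+ 2) (q ^+ 2) n) ^+ 2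
    * \sum_(1 <= j < n.+1) (q ^+ (2 * j) / (qint q (2 * j)) ^+ 2).
Proof.
move=> _ hq0 hq1.
have q0 : q != 0 by rewrite -normr_gt0.
have qm : forall m, (0 < m)%N -> 1 - q ^+ m != 0.
  move=> m hm; rewrite subr_eq0; apply/negP => /eqP H.
  have : `|q ^+ m| = 1 by rewrite -H normr1.
  rewrite normrX => H2.
  have : `|q| ^+ m < 1 by rewrite expr_lt1 // normr_ge0.
  by rewrite H2 ltxx.
exact: (@main_gen _ q q0 qm n).
Qed.
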